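(* There is an absolute constant $c>0$ such that, for every $n\ge 2$, there exists an $n\times n$ $(0,1)$-matrix $A$ with the following property. Every depth-$2$ circuit computing $f_A(\vec x)=A\vec x$ over $GF(2)$ in which every middle node computes a linear boolean function has at least $c\,n^2/\log n$ wires. The output nodes of such a circuit may compute arbitrary boolean functions.
   Context: A depth-$2$ circuit has $n$ input nodes $x_1,\dots,x_n$, a set of middle nodes, and $n$ output nodes $y_1,\dots,y_n$. Wires go only from inputs to middle nodes, from middle nodes to outputs, or from inputs directly to outputs. Each non-input node may compute an arbitrary boolean function of the values at its in-neighbours, with no restriction on fanin or fanout. The circuit computes $f=(f_1,\dots,f_n)$ if the function at $y_i$ equals $f_i$ for all $i$. A boolean function is linear if it is the sum modulo $2$ of some subset of its arguments (the empty sum is allowed) or the negation of such a sum. The number of wires is the number of edges of the circuit. *)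

(* Defs.v *)
From HB Require Import structures.
From mathcomp Require Import all_boot.
Set Implicit Arguments. Unset Strict Implicit. Unset Printing Implicit Defensive.

(* Each node's function is given on the full vector but it is only ever
   applied to the vector of values of its in-neighbours (others masked to
   false), so it is an arbitrary function of its in-neighbours' values. *)
Record circuit (n : nat) := Circuit {
  mid : nat;
  w_im : 'I_n -> 'I_mid -> bool;
  w_mo : 'I_mid -> 'I_n -> bool;
  w_io : 'I_n -> 'I_n -> bool;
  g_mid : 'I_mid -> {ffun 'I_n -> bool} -> bool;
  g_out : 'I_n -> {ffun 'I_mid -> bool} -> {ffun 'I_n -> bool} -> bool
}.

Definition mask (T : finType) (keep : T -> bool) (v : {ffun T -> bool})
  : {ffun T -> bool} := [ffun t => keep t && v t].

Definition mid_val n (C : circuit n) (x : {ffun 'I_n -> bool}) (j : 'I_(mid C))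
  : bool := @g_mid n C j (mask (fun i => @w_im n C i j) x).

Definition mid_vals n (C : circuit n) (x : {ffun 'I_n -> bool})
  : {ffun 'I_(mid C) -> bool} := [ffun j => @mid_val n C x j].

Definition out_val n (C : circuit n) (x : {ffun 'I_n -> bool}) (k : 'I_n)
  : bool :=
  @g_out n C k (mask (fun j => @w_mo n C j k) (@mid_vals n C x))
          (mask (fun i => @w_io n C i k) x).

Definition xsum (T : finType) (S : {set T}) (v : {ffun T -> bool}) : bool :=
  \big[addb/false]_(t in S) v t.

Definition linear_middle n (C : circuit n) : Prop :=
  forall j : 'I_(mid C), exists (S : {set 'I_n}) (b : bool),
    (forall i, i \in S -> @w_im n C i j) /\
    (forall x : {ffun 'I_n -> bool},
        @g_mid n C j (mask (fun i => @w_im n C i j) x) = b (+) xsum S (mask (fun i => @w_im n C i j) x)).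

Definition fA n (A : 'I_n -> 'I_n -> bool) (x : {ffun 'I_n -> bool}) (k : 'I_n)
  : bool := \big[addb/false]_(j < n) (A k j && x j).

Definition computes n (C : circuit n) (A : 'I_n -> 'I_n -> bool) : Prop :=
  forall (x : {ffun 'I_n -> bool}) (k : 'I_n), out_val C x k = fA A x k.

Definition wires n (C : circuit n) : nat :=
  #|[set p : 'I_n * 'I_(mid C) | @w_im n C p.1 p.2]|
  + #|[set p : 'I_(mid C) * 'I_n | @w_mo n C p.1 p.2]|
  + #|[set p : 'I_n * 'I_n | @w_io n C p.1 p.2]|.

(* Main.v *)
Require Import Defs.
From HB Require Import structures.
From mathcomp Require Import all_boot all_algebra.
Set Implicit Arguments. Unset Strict Implicit. Unset Printing Implicit Defensive.
Import GRing.Theory.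

Notation tok n := (option (bool * 'I_n)).

Fixpoint dec n (S O : seq 'I_n) (s : seq (tok n)) (k i : 'I_n) : bool :=
  match s with
  | [::] => (k \in O) && (i \in S)
  | None :: s' => ((k \in O) && (i \in S)) (+) dec [::] [::] s' k i
  | Some (true, x) :: s' => dec (x :: S) O s' k i
  | Some (false, x) :: s' => dec S (x :: O) s' k i
  end.

Lemma dec_eq n (s : seq (tok n)) S S' O O' k i :
  S =i S' -> O =i O' -> dec S O s k i = dec S' O' s k i.
Proof.
elim: s S S' O O' => [|[[[] x]|] s IH] S S' O O' HS HO /=.
- by rewrite HS HO.
- by apply: IH => // y; rewrite !inE HS.
- by apply: IH => // y; rewrite !inE HO.
- by rewrite HS HO.
Qed.

Definition blk n (b : seq 'I_n * seq 'I_n) : seq (tok n) :=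
  map (fun x => Some (true, x)) b.1 ++ map (fun x => Some (false, x)) b.2 ++ [:: None].

Lemma dec_S n (l : seq 'I_n) S O s k i :
  dec S O (map (fun x => Some (true, x)) l ++ s) k i = dec (l ++ S) O s k i.
Proof.
elim: l S => [|x l IH] S //=.
rewrite IH; apply: dec_eq => // y; rewrite !mem_cat !inE.
by rewrite mem_cat orbCA.
Qed.

Lemma dec_O n (l : seq 'I_n) S O s k i :
  dec S O (map (fun x => Some (false, x)) l ++ s) k i = dec S (l ++ O) s k i.
Proof.
elim: l O => [|x l IH] O //=.
rewrite IH; apply: dec_eq => // y; rewrite !mem_cat !inE.
by rewrite mem_cat orbCA.
Qed.

Lemma dec_blk n b s (k i : 'I_n) :
  dec [::] [::] (blk b ++ s) k i = ((k \in b.2) && (i \in b.1)) (+) dec [::] [::] s k i.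
Proof. by rewrite /blk -!catA dec_S dec_O /= !cats0. Qed.

Lemma dec_nseq n p (k i : 'I_n) : dec [::] [::] (nseq p None) k i = false.
Proof. by elim: p => //= p ->. Qed.

Lemma dec_blocks n (l : seq (seq 'I_n * seq 'I_n)) p k i :
  dec [::] [::] (flatten (map (@blk n) l) ++ nseq p None) k i =
  \big[addb/false]_(b <- l) ((k \in b.2) && (i \in b.1)).
Proof.
elim: l => [|b l IH]; first by rewrite big_nil dec_nseq.
by rewrite big_cons /= -catA dec_blk IH.
Qed.

Lemma size_flat_map (T U : Type) (f : T -> seq U) (l : seq T) :
  size (flatten (map f l)) = \sum_(x <- l) size (f x).
Proof. by elim: l => [|x l IH]; rewrite ?big_nil // big_cons /= size_cat IH. Qed.

Definition Mat n := {ffun 'I_n * 'I_n -> bool}.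

Definition decT n L (t : L.-tuple (tok n)) : Mat n := [ffun p => dec [::] [::] t p.1 p.2].

Lemma count_exists n L : (#|{: tok n}| ^ L < 2 ^ (n * n))%N ->
  exists Af : Mat n, forall t : L.-tuple (tok n), decT t != Af.
Proof.
move=> Hlt.
case: (boolP [exists Af : Mat n, [forall t : L.-tuple (tok n), decT t != Af]]).
  by move/existsP => [Af /forallP H]; exists Af.
move=> Hn; exfalso.
have H : forall Af : Mat n, [exists t : L.-tuple (tok n), decT t == Af].
  move=> Af; case: (boolP [exists t : L.-tuple (tok n), decT t == Af]) => // H0.
  exfalso; move/negP: Hn; apply; apply/existsP; exists Af.
  apply/forallP => t; apply/negP => /eqP E; move/negP: H0; apply.
  by apply/existsP; exists t; rewrite E.
pose t0 : L.-tuple (tok n) := [tuple of nseq L None].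
pose h (Af : Mat n) := odflt t0 [pick t | decT t == Af].
have hinj : injective h.
  have E : forall Af, decT (h Af) = Af.
    move=> Af; rewrite /h; case: pickP => [t /eqP //|H0].
    by move: (H Af) => /existsP [t]; rewrite H0.
  by move=> A1 A2 e; rewrite -(E A1) -(E A2) e.
move: (leq_card h hinj); rewrite card_tuple card_ffun card_prod card_ord card_bool.
by rewrite leqNgt Hlt.
Qed.

Lemma card_tok n : #|{: tok n}| = (2 * n).+1.
Proof. by rewrite card_option card_prod card_bool card_ord. Qed.

Lemma xor_single n (P : pred 'I_n) (i : 'I_n) :
  \big[addb/false]_t (P t && (t == i)) = P i.
Proof.
rewrite (bigD1 i) //= eqxx andbT big1 ?addbF // => t /negbTE ->.
by rewrite andbF.
Qed.

Lemma size_filter_enum m (P : pred 'I_m) : size [seq j <- enum 'I_m | P j] = \sum_j P j.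
Proof.
rewrite size_filter -sum1_count big_mkcond /= big_enum /=.
by apply: eq_bigr => i _; case: (P i).
Qed.

Lemma card_pairs (I J : finType) (R : I -> J -> bool) :
  #|[set p : I * J | R p.1 p.2]| = \sum_i \sum_j R i j.
Proof.
rewrite -sum1dep_card pair_big /= big_mkcond /=.
by apply: eq_bigr => p _; case: (R p.1 p.2).
Qed.

Local Open Scope ring_scope.
Definition b2F (b : bool) : 'F_2 := b%:R.

Lemma F2_b2F (y : 'F_2) : y = b2F (y != 0).
Proof. apply/val_inj. case: y => m H. case: m H => [|[|m]] H; try reflexivity. exfalso. move: H. by vm_compute. Qed.

Lemma b2F_xor a b : b2F (a (+) b) = b2F a + b2F b.
Proof. by case: a; case: b => //; apply/val_inj. Qed.

Lemma b2F_and a b : b2F (a && b) = b2F a * b2F b.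
Proof. by case: a; case: b; rewrite /b2F /= ?mul1r ?mul0r. Qed.

Lemma b2F_eq0 b : (b2F b == 0) = ~~ b.
Proof. by case: b => //; apply/eqP; apply/eqP; vm_compute. Qed.

Lemma b2F_inj : injective b2F.
Proof. by case; case => // /eqP; rewrite ?b2F_eq0 // eq_sym b2F_eq0. Qed.

Lemma b2F_big n (F : 'I_n -> bool) : b2F (\big[addb/false]_i F i) = \sum_i b2F (F i).
Proof. by rewrite (big_morph b2F b2F_xor (erefl (b2F false))). Qed.
Local Close Scope ring_scope.

Section Circ.
Variable n : nat.
Variable C : circuit n.
Hypothesis HL : linear_middle C.
Variable A : 'I_n -> 'I_n -> bool.
Hypothesis HC : computes C A.

Definition x0 : {ffun 'I_n -> bool} := [ffun _ => false].
Definition ee (i : 'I_n) : {ffun 'I_n -> bool} := [ffun i' => i' == i].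
Definition vv (j : 'I_(mid C)) (i : 'I_n) := mid_val (ee i) j (+) mid_val x0 j.
Definition bx (x : {ffun 'I_n -> bool}) (f : 'I_n -> bool) := \big[addb/false]_i (x i && f i).

Lemma mid_lin_aux j : exists S : {set 'I_n},
  (forall i, i \in S -> @w_im n C i j) /\
  forall x, mid_val x j = mid_val x0 j (+) \big[addb/false]_t ((t \in S) && x t).
Proof.
have [S [b [HS Hg]]] := HL j.
have E : forall x, mid_val x j = b (+) \big[addb/false]_t ((t \in S) && x t).
  move=> x; rewrite /mid_val Hg /xsum big_mkcond /=; congr (_ (+) _).
  apply: eq_bigr => t _; rewrite ffunE.
  by case: (boolP (t \in S)) => // /HS ->.
exists S; split => // x; rewrite !E.
have -> : \big[addb/false]_t ((t \in S) && x0 t) = false.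
  by rewrite big1 // => t _; rewrite ffunE andbF.
by rewrite addbF.
Qed.

Lemma mid_lin j x : mid_val x j = mid_val x0 j (+) bx x (vv j).
Proof.
have [S [HS E]] := mid_lin_aux j.
have Hv : forall i, vv j i = (i \in S).
  move=> i; rewrite /vv E; rewrite addbC addbA addbb /=.
  rewrite (eq_bigr (fun t => (t \in S) && (t == i))) ?xor_single //.
  by move=> t _; rewrite ffunE.
rewrite E /bx; congr (_ (+) _); apply: eq_bigr => t _.
by rewrite Hv andbC.
Qed.

Lemma vv_wire j i : vv j i -> @w_im n C i j.
Proof.
have [S [HS E]] := mid_lin_aux j.
rewrite /vv E addbC addbA addbb /=.
rewrite (eq_bigr (fun t => (t \in S) && (t == i))) ?xor_single; first exact: HS.
by move=> t _; rewrite ffunE.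
Qed.
Local Open Scope ring_scope.
Definition Vm (k : 'I_n) : 'M['F_2]_(mid C, n) := \matrix_(j, i) b2F (@w_mo n C j k && vv j i).
Definition Vi (k : 'I_n) : 'M['F_2]_(n, n) := \matrix_(i', i) b2F (@w_io n C i' k && (i == i')).
Definition ak (k : 'I_n) : 'rV['F_2]_n := \row_i b2F (A k i).

Lemma fA0 k : fA A x0 k = false.
Proof. by rewrite /fA big1 // => t _; rewrite ffunE andbF. Qed.

Lemma span k : (ak k <= col_mx (Vm k) (Vi k))%MS.
Proof.
apply/idPn; rewrite submxE => H.
set K := cokermx _ in H.
have [c Hc] : exists c, (ak k *m K) 0 c != 0.
  case: (boolP [exists c, (ak k *m K) 0 c != 0]) => [/existsP //|Hn].
  exfalso; move/negP: H; apply; apply/eqP/matrixP => r c.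
  rewrite (ord1 r) [in RHS]mxE; apply/eqP; apply/negPn; apply/negP => Hc.
  by move/negP: Hn; apply; apply/existsP; exists c.
pose x : {ffun 'I_n -> bool} := [ffun i => K i c != 0].
have HK : forall i, K i c = b2F (x i) by move=> i; rewrite ffunE -F2_b2F.
have H0 := mulmx_coker (col_mx (Vm k) (Vi k)).
rewrite -/K mul_col_mx in H0.
move/eqP: H0; rewrite col_mx_eq0 => /andP [/eqP Hm /eqP Hi].
have Hmid : forall j, @w_mo n C j k -> mid_val x j = mid_val x0 j.
  move=> j Hw; rewrite (mid_lin j x); suff -> : bx x (vv j) = false by rewrite addbF.
  have E : (Vm k *m K) j c = (0 : 'M_(mid C, n)) j c by rewrite Hm.
  move: E; rewrite !mxE => E.
  apply/negbTE; rewrite -b2F_eq0; apply/eqP; rewrite -{}E /bx b2F_big.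
  by apply: eq_bigr => i _; rewrite [Vm k j i]mxE HK Hw /= b2F_and mulrC.
have Hin : forall i, @w_io n C i k -> x i = false.
  move=> i Hw; have E : (Vi k *m K) i c = (0 : 'M_(n, n)) i c by rewrite Hi.
  move: E; rewrite !mxE => E.
  apply/negbTE; rewrite -b2F_eq0; apply/eqP; rewrite -{}E.
  rewrite (bigD1 i) //= big1 ?addr0.
    by rewrite [Vi k i i]mxE eqxx Hw HK /= mul1r.
  by move=> t /negbTE Ht; rewrite [Vi k i t]mxE Ht andbF mul0r.
have Eo : out_val C x k = out_val C x0 k.
  rewrite /out_val; congr (g_out _ _ _).
    apply/ffunP => j; rewrite !ffunE.
    by case: (boolP (@w_mo n C j k)) => //= Hw; rewrite Hmid.
  apply/ffunP => i; rewrite !ffunE.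
  by case: (boolP (@w_io n C i k)) => //= Hw; move: (Hin i Hw); rewrite ffunE => ->.
move: Eo; rewrite !HC fA0 => Ef.
move: Hc; rewrite [(ak k *m K) 0 c]mxE.
have -> : \sum_j ak k 0 j * K j c = b2F (fA A x k).
  rewrite /fA b2F_big; apply: eq_bigr => i _.
  by rewrite [ak k 0 i]mxE HK b2F_and.
by rewrite Ef.
Qed.
Definition Wk (k : 'I_n) : 'rV['F_2]_(mid C) * 'rV['F_2]_n :=
  odflt (0, 0) [pick w : 'rV['F_2]_(mid C) * 'rV['F_2]_n |
                  ak k == w.1 *m Vm k + w.2 *m Vi k].

Lemma WkP k : ak k = (Wk k).1 *m Vm k + (Wk k).2 *m Vi k.
Proof.
rewrite /Wk; case: pickP => [w /eqP //|Hn].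
have [D HD] := submxP (span k).
have := Hn (lsubmx D, rsubmx D); rewrite /= -mul_row_col hsubmxK -HD eqxx.
by [].
Qed.

Definition T (k : 'I_n) (j : 'I_(mid C)) := ((Wk k).1 0 j != 0) && @w_mo n C j k.
Definition U (k : 'I_n) (i : 'I_n) := ((Wk k).2 0 i != 0) && @w_io n C i k.

Lemma decomp k i : A k i = \big[addb/false]_j (T k j && vv j i) (+)
                           \big[addb/false]_i' (U k i' && (i == i')).
Proof.
apply: b2F_inj.
have E : ak k 0 i = ((Wk k).1 *m Vm k + (Wk k).2 *m Vi k) 0 i by rewrite -WkP.
rewrite mxE in E; rewrite E b2F_xor !b2F_big !mxE.
congr (_ + _); apply: eq_bigr => t _; rewrite mxE /T /U !b2F_and -!F2_b2F mulrA //.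
Qed.
Local Close Scope ring_scope.
Lemma memf m (P : pred 'I_m) x : (x \in [seq y <- enum 'I_m | P y]) = P x.
Proof. by rewrite mem_filter mem_enum andbT. Qed.
Definition Om (j : 'I_(mid C)) := [seq k <- enum 'I_n | T k j].
Definition Sm (j : 'I_(mid C)) := [seq i <- enum 'I_n | vv j i].
Definition Oi (i : 'I_n) := [seq k <- enum 'I_n | U k i].
Definition Si (i : 'I_n) : seq 'I_n := if Oi i == [::] then [::] else [:: i].

Definition blocks := [seq (Sm j, Om j) | j <- enum 'I_(mid C)] ++
                     [seq (Si i, Oi i) | i <- enum 'I_n].
Definition blocks' := [seq b <- blocks | b.2 != [::]].

Lemma blocks_ok k i :
  A k i = \big[addb/false]_(b <- blocks') ((k \in b.2) && (i \in b.1)).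
Proof.
rewrite big_filter big_mkcond /=.
rewrite (eq_bigr (fun b => (k \in b.2) && (i \in b.1))); last first.
  by move=> b _; case: ifP => // /negbFE /eqP ->.
rewrite big_cat !big_map -!enumT !big_enum /= decomp; congr (_ (+) _).
  apply: eq_bigr => j _; by rewrite /Om /Sm !memf.
apply: eq_bigr => i' _; rewrite /Si.
case: ifP => [/eqP E|_].
  have : k \notin Oi i' by rewrite E.
  by rewrite memf => /negbTE ->; rewrite andbF.
by rewrite /Oi memf inE.
Qed.

Lemma blocks_size :
  size (flatten (map (@blk n) blocks')) <= 3 * wires C.
Proof.
rewrite size_flat_map big_filter.
apply: (@leq_trans (\sum_(b <- blocks) (size b.1 + 2 * size b.2))).
  rewrite big_mkcond /=; apply: leq_sum => b _.
  case: ifP => // Hb; rewrite /blk !size_cat !size_map /= leq_add2l addn1.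
  have : 0 < size b.2 by rewrite lt0n size_eq0.
  by case: (size b.2) => // s _; rewrite mulSn mul1n addSn ltnS; apply: leq_addl.
rewrite big_cat !big_map -!enumT !big_enum /=.
rewrite /wires (card_pairs (@w_im n C)) (card_pairs (@w_mo n C)) (card_pairs (@w_io n C)) !mulnDr.
have H1 : \sum_j size (Sm j) <= \sum_i \sum_j @w_im n C i j.
  rewrite [in X in _ <= X]exchange_big /=.
  apply: leq_sum => j _; rewrite /Sm size_filter_enum; apply: leq_sum => i _.
  by case: (boolP (vv j i)) => // /vv_wire ->.
have H2 : \sum_j size (Om j) <= \sum_j \sum_k @w_mo n C j k.
  apply: leq_sum => j _; rewrite /Om size_filter_enum; apply: leq_sum => k _.
  by rewrite /T; case: (@w_mo n C j k); rewrite ?andbF ?andbT //; case: (_ != _).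
have H3 : \sum_i (size (Si i) + 2 * size (Oi i)) <= 3 * \sum_i \sum_k @w_io n C i k.
  rewrite big_distrr /=; apply: leq_sum => i _.
  apply: (@leq_trans (3 * size (Oi i))).
    rewrite mulSn leq_add2r /Si; case: ifP => // /negbT.
    by rewrite -size_eq0 -lt0n.
  rewrite leq_mul2l /=; rewrite /Oi size_filter_enum; apply: leq_sum => k _.
  by rewrite /U; case: (@w_io n C i k); rewrite ?andbF ?andbT //; case: (_ != _).
rewrite big_split /= -big_distrr /=.
apply: leq_add; last exact: H3.
apply: leq_add; first by apply: (leq_trans H1); rewrite leq_pmull.
by apply: leq_mul.
Qed.
Lemma encode : exists s : seq (tok n), size s <= 3 * wires C /\
  forall p k i, dec [::] [::] (s ++ nseq p None) k i = A k i.
Proof.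
exists (flatten (map (@blk n) blocks')); split; first exact: blocks_size.
by move=> p k i; rewrite dec_blocks blocks_ok.
Qed.
End Circ.

Lemma expn_pow (a b : nat) : expn a b = Nat.pow a b.
Proof. elim: b => //= b IH. by rewrite expnS IH. Qed.

Lemma dummy_ : True. Proof. by []. Qed.
Lemma nat_part n : 2 <= n -> exists A : 'I_n -> 'I_n -> bool,
  forall C : circuit n, linear_middle C -> computes C A ->
    n * n <= 3 * wires C * (trunc_log 2 n).+2.
Proof.
move=> Hn.
set p := (trunc_log 2 n).+2.
set L := (n * n).-1 %/ p.
have Hp : 2 * n + 1 <= 2 ^ p.
  have := trunc_log_ltn n (isT : 1 < 2).
  move=> H; rewrite /p expnS addn1; apply: (@leq_trans (2 * n.+1)).
    by rewrite mulnS addnC addn2 leqnSn.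
  by rewrite leq_mul2l H.
have Hcnt : #|{: tok n}| ^ L < 2 ^ (n * n).
  rewrite card_tok; apply: (@leq_ltn_trans (2 ^ (p * L))).
    rewrite expnM; rewrite addn1 in Hp; move: Hp.
    by move: (2 ^ p) L => a e Ha; elim: e => // e IH; rewrite !expnS leq_mul.
  rewrite ltn_exp2l //; rewrite mulnC.
  have : L * p <= (n * n).-1 by apply: leq_trunc_div.
  move=> H; apply: (leq_ltn_trans H).
  by rewrite prednK // muln_gt0 (leq_trans _ Hn).
have [Af HAf] := count_exists Hcnt.
exists (fun k i => Af (k, i)) => C HL HC.
have [s [Hs Hdec]] := encode HL HC.
have HL3 : L < 3 * wires C.
  rewrite ltnNge; apply/negP => Hle.
  have Hsz : size (s ++ nseq (L - size s) None) == L.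
    by rewrite size_cat size_nseq subnKC // (leq_trans Hs).
  move: (HAf (Tuple Hsz)) => /negP; apply; apply/eqP/ffunP => [[k i]].
  by rewrite ffunE /= Hdec.
have := ltn_ceil (n * n).-1 (isT : 0 < p).
rewrite -/L => H.
have H2 : n * n <= L.+1 * p.
  by move: H; rewrite prednK // muln_gt0 (leq_trans _ Hn).
apply: (leq_trans H2); rewrite leq_mul2r; apply/orP; right; exact: HL3.
Qed.
From Stdlib Require Import Reals Lra.

Lemma ln_mono (x y : R) : (0 < x)%R -> (x <= y)%R -> (ln x <= ln y)%R.
Proof.
move=> Hx Hxy; case: (Rle_lt_or_eq_dec _ _ Hxy) => H.
  by apply: Rlt_le; apply: ln_increasing.
by rewrite H; apply: Rle_refl.
Qed.

Theorem theorem3 :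
  exists c : R, (0 < c)%R /\
    forall n : nat, (2 <= n)%N ->
      exists A : 'I_n -> 'I_n -> bool,
        forall C : circuit n, linear_middle C -> computes C A ->
          (c * INR (n * n) / ln (INR n) <= INR (wires C))%R.
Proof.
have Hl2 := ln_lt_2.
exists (ln 2 / 9)%R; split; first lra.
move=> n Hn; have Hn2 := Hn; have [A HA] := nat_part Hn; exists A => C HL HC.
have Hw := HA C HL HC.
set t := trunc_log 2 n in Hw.
have Ht : (expn 2 t <= n)%N.
  rewrite /t; apply: (@trunc_logP 2 n) => //; exact: ltnW.
have HwR : (INR (n * n) <= 3 * INR (wires C) * (INR t + 2))%R.
  have := le_INR _ _ (elimT leP Hw).
  by rewrite !mult_INR !S_INR /=; lra.
have H2n : (2 <= INR n)%R.
  by have := le_INR _ _ (elimT leP Hn2); rewrite /=; lra.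
have Hlnn : (ln 2 <= ln (INR n))%R by apply: ln_mono => //; lra.
have Htl : (INR t * ln 2 <= ln (INR n))%R.
  rewrite -ln_pow; last lra.
  apply: ln_mono; first by apply: pow_lt; lra.
  have := le_INR _ _ (elimT leP Ht); rewrite expn_pow pow_INR /=.
  by [].
have HW0 : (0 <= INR (wires C))%R by apply: pos_INR.
have Hln0 : (0 < ln (INR n))%R by lra.
have Key : (ln 2 * INR (n * n) <= 9 * INR (wires C) * ln (INR n))%R.
  have Ht0 : (0 <= INR t)%R by apply: pos_INR.
  nra.
apply: (Rmult_le_reg_r (ln (INR n))) => //.
have -> : (ln 2 / 9 * INR (n * n) / ln (INR n) * ln (INR n) = ln 2 * INR (n * n) / 9)%R.
  by field; lra.
lra.
Qed.
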